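(* Let $\mu=(p,q,r,s)\in\mathbb{R}^4$ with $(p,q,r)\neq(0,0,0)$, and let $\alpha=\max\{|p|,|q|,|r|\}/2$. There exists a $\mu$-Markoff map $\phi\in\Phi_\mu$ such that $\Omega_\phi(2+\alpha)=\{X\in\Omega:|\phi(X)|\le 2+\alpha\}$ is finite.
   Context: Let $\Sigma$ be a countably infinite simplicial tree, properly embedded in the plane, all of whose vertices have degree $3$. A complementary region is the closure of a connected component of the complement of $\Sigma$; $\Omega$ is the set of complementary regions, $E(\Sigma)$ the set of edges. Every edge $e$ is the intersection of exactly two regions $X,Y$, and its two endpoints lie on two further regions $Z,W$ respectively; write $e\leftrightarrow(X,Y;Z,W)$. Three regions meet at each vertex. Fix a coloring $\mathcal C:\Omega\cup E(\Sigma)\to\{1,2,3\}$ such that for every $e\leftrightarrow(X,Y;Z,W)$, $\mathcal C(e)=\mathcal C(Z)=\mathcal C(W)$ and $\mathcal C(e),\mathcal C(X),\mathcal C(Y)$ are pairwise distinct; $\Omega_i$, $E_i$ denote regions/edges of color $i$. For $\mu=(p,q,r,s)$, a $\mu$-Markoff map is $\phi:\Omega\to\mathbb{C}$ such that (i) at every vertex with regions $X\in\Omega_1,Y\in\Omega_2,Z\in\Omega_3$, $x^2+y^2+z^2+xyz=px+qy+rz+s$ where $x=\phi(X)$, etc.; (ii) for $e\in E_1$, $e\leftrightarrow(Y,Z;X,X')$: $\phi(X)+\phi(X')=p-\phi(Y)\phi(Z)$; for $e\in E_2$, $e\leftrightarrow(X,Z;Y,Y')$: $\phi(Y)+\phi(Y')=q-\phi(X)\phi(Z)$;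 for $e\in E_3$, $e\leftrightarrow(X,Y;Z,Z')$: $\phi(Z)+\phi(Z')=r-\phi(X)\phi(Y)$. $\Phi_\mu$ is the set of such maps. *)

(* Defs.v *)
From Stdlib Require Import Reals ZArith List.
From Coquelicot Require Import Coquelicot.

(* Concrete model of the trivalent planar tree Sigma (dual to the Farey
   tessellation).  A complementary region is a primitive vector (a,b) of Z^2
   up to sign, normalised so that b > 0, or (a,b) = (1,0).  Two regions X,Y
   share an edge iff |det(X,Y)| = 1; that edge has endpoints lying on the
   further regions +-(X+Y) and +-(X-Y). *)

Definition zdet (u v : Z * Z) : Z := (fst u * snd v - snd u * fst v)%Z.

Definition zadd (u v : Z * Z) : Z * Z := (fst u + fst v, snd u + snd v)%Z.
Definition zsub (u v : Z * Z) : Z * Z := (fst u - fst v, snd u - snd v)%Z.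

Definition znormal (v : Z * Z) : Z * Z :=
  if orb (snd v <? 0)%Z (andb (snd v =? 0)%Z (fst v <? 0)%Z)
  then (- fst v, - snd v)%Z else v.

Definition is_region (v : Z * Z) : Prop :=
  Z.gcd (fst v) (snd v) = 1%Z /\ ((0 < snd v)%Z \/ (snd v = 0%Z /\ fst v = 1%Z)).

Definition Omega : Type := { v : Z * Z | is_region v }.

Definition rv (X : Omega) : Z * Z := proj1_sig X.

Definition adjacent (X Y : Omega) : Prop := Z.abs (zdet (rv X) (rv Y)) = 1%Z.

Definition at_vertex (X Y Z : Omega) : Prop :=
  adjacent X Y /\ (rv Z = znormal (zadd (rv X) (rv Y)) \/
                   rv Z = znormal (zsub (rv X) (rv Y))).

Definition edge_ends (X Y Z W : Omega) : Prop :=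
  adjacent X Y /\ rv Z = znormal (zadd (rv X) (rv Y)) /\
  rv W = znormal (zsub (rv X) (rv Y)).

(* The coloring C : colour of a region = its class mod 2:
   (odd,even) -> 1, (even,odd) -> 2, (odd,odd) -> 3.  This satisfies the
   rules of the coloring (edge colour = colour of its endpoint regions, which
   differs from the colours of the two regions containing it). *)
Definition color (X : Omega) : nat :=
  if Z.even (fst (rv X)) then 2%nat
  else if Z.even (snd (rv X)) then 1%nat else 3%nat.

Definition markoff_map (p q r s : C) (phi : Omega -> C) : Prop :=
  (forall X Y Z : Omega, at_vertex X Y Z ->
     color X = 1%nat -> color Y = 2%nat -> color Z = 3%nat ->
     let x := phi X in let y := phi Y in let z := phi Z in
     Cplus (Cplus (Cplus (Cmult x x) (Cmult y y)) (Cmult z z)) (Cmult (Cmult x y) z)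
     = Cplus (Cplus (Cplus (Cmult p x) (Cmult q y)) (Cmult r z)) s) /\
  (* (ii) edge relations, e <-> (X,Y; Z,W), C(e) = C(Z) = C(W) *)
  (forall X Y Z W : Omega, edge_ends X Y Z W ->
     color X = 2%nat -> color Y = 3%nat ->
     Cplus (phi Z) (phi W) = Cminus p (Cmult (phi X) (phi Y))) /\
  (forall X Y Z W : Omega, edge_ends X Y Z W ->
     color X = 1%nat -> color Y = 3%nat ->
     Cplus (phi Z) (phi W) = Cminus q (Cmult (phi X) (phi Y))) /\
  (forall X Y Z W : Omega, edge_ends X Y Z W ->
     color X = 1%nat -> color Y = 2%nat ->
     Cplus (phi Z) (phi W) = Cminus r (Cmult (phi X) (phi Y))).

Definition small_set_finite (phi : Omega -> C) (t : R) : Prop :=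
  exists l : list (Z * Z), forall X : Omega, (Cmod (phi X) <= t)%R -> In (rv X) l.

(* Main.v *)
Require Import Defs.
From Stdlib Require Import Reals ZArith List.
From Coquelicot Require Import Coquelicot.
From Stdlib Require Import Lia Lra Psatz ClassicalEpsilon Znumtheory.

Open Scope Z_scope.

Definition zopp (v : Z * Z) : Z * Z := (- fst v, - snd v).

Definition colz (v : Z * Z) : nat :=
  if Z.even (fst v) then 2%nat else if Z.even (snd v) then 1%nat else 3%nat.

Lemma colz_opp v : colz (zopp v) = colz v.
Proof. destruct v as [a b]; unfold colz, zopp; simpl. now rewrite !Z.even_opp. Qed.

Lemma znormal_cases v : znormal v = v \/ znormal v = zopp v.
Proof. unfold znormal. destruct (_ || _)%bool; [right|left]; reflexivity. Qed.

Definition is_par (v X Y : Z * Z) : Prop :=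
  Z.abs (zdet X Y) = 1 /\ zadd X Y = v /\ Z.abs (snd X - snd Y) < Z.abs (snd v).

Lemma small_mult (D D' j b : Z) : Z.abs D < Z.abs b -> Z.abs D' < Z.abs b ->
  D' = D + 2 * j * b -> j = 0.
Proof.
  intros H1 H2 H3.
  assert (Z.abs (2 * j * b) < 2 * Z.abs b) by lia.
  rewrite !Z.abs_mul in H. destruct (Z.eq_dec j 0); auto.
  assert (1 <= Z.abs j) by lia. nia.
Qed.

Lemma par_unique v X Y X' Y' : is_par v X Y -> is_par v X' Y' ->
  (X' = X /\ Y' = Y) \/ (X' = Y /\ Y' = X).
Proof.
  destruct v as [v1 v2], X as [x1 x2], Y as [y1 y2], X' as [a1 a2], Y' as [b1 b2].
  unfold is_par, zdet, zadd; simpl. intros [H1 [H2 H3]] [H1' [H2' H3']].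
  injection H2 as E1 E2. injection H2' as E1' E2'. subst v1 v2.
  assert (Ey1 : y1 = (a1 + b1) - x1) by lia. assert (Ey2 : y2 = (a2+b2) - x2) by lia.
  subst y1 y2.
  set (v1 := a1 + b1) in *. set (v2 := a2 + b2) in *.
  assert (Eb1 : b1 = v1 - a1) by (unfold v1; lia). assert (Eb2 : b2 = v2 - a2) by (unfold v2; lia).
  rewrite Eb1, Eb2 in *. clearbody v1 v2. clear Eb1 Eb2.
  set (e := x1 * v2 - x2 * v1). set (e' := a1 * v2 - a2 * v1). set (k := a1 * x2 - a2 * x1).
  assert (He : Z.abs e = 1). { unfold e. replace (x1 * v2 - x2 * v1) with (x1 * (v2 - x2) - x2 * (v1 - x1)) by ring. auto. }
  assert (He' : Z.abs e' = 1). { unfold e'. replace (a1 * v2 - a2 * v1) with (a1 * (v2 - a2) - a2 * (v1 - a1)) by ring. auto. }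
  assert (I1 : e * a1 = e' * x1 - k * v1) by (unfold e, e', k; ring).
  assert (I2 : e * a2 = e' * x2 - k * v2) by (unfold e, e', k; ring).
  clearbody e e' k. clear H1 H1'.
  assert (Hee : (e = 1 \/ e = -1) /\ (e' = 1 \/ e' = -1)) by lia.
  destruct Hee as [[-> | ->] [-> | ->]].
  - left. assert (Hk : -k = 0) by (apply (small_mult (x2 - (v2 - x2)) (a2 - (v2 - a2)) (- k) v2); lia).
    split; f_equal; lia.
  - right. assert (Hk : k + 1 = 0) by (apply (small_mult (x2 - (v2 - x2)) (-(a2 - (v2 - a2))) (k + 1) v2); lia).
    split; f_equal; lia.
  - right. assert (Hk : 1 - k = 0) by (apply (small_mult (x2 - (v2 - x2)) (-(a2 - (v2 - a2))) (1 - k) v2); lia).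
    split; f_equal; lia.
  - left. assert (Hk : k = 0) by (apply (small_mult (x2 - (v2 - x2)) (a2 - (v2 - a2)) k v2); lia).
    split; f_equal; lia.
Qed.


Close Scope Z_scope.

Definition cst (p q r : R) (k : nat) : C :=
  match k with 1%nat => RtoC p | 2%nat => RtoC q | _ => RtoC r end.

Definition ch (q r : R) (A B : C) (n : Z) : C :=
  match (n mod 4)%Z with 0%Z => A | 1%Z => B | 2%Z => (RtoC q - A)%C | _ => (RtoC r - B)%C end.

Definition base (q r : R) (A B : C) (v : Z * Z) : C :=
  if (snd v =? 0)%Z then 0%C else ch q r A B (fst v * snd v).

Definition is_parb (v : Z * Z) (P : (Z * Z) * (Z * Z)) : bool :=
  andb (andb (andb (Z.abs (zdet (fst P) (snd P)) =? 1)%Z (fst (fst P) + fst (snd P) =? fst v)%Z)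
   (snd (fst P) + snd (snd P) =? snd v)%Z)
   (Z.abs (snd (fst P) - snd (snd P)) <? Z.abs (snd v))%Z.

Definition dflt : (Z * Z) * (Z * Z) := ((0,0),(0,0))%Z.

Definition choose (v : Z * Z) : (Z * Z) * (Z * Z) :=
  let P := epsilon (inhabits dflt) (fun P => is_parb v P = true) in
  if is_parb v P then P else dflt.

Fixpoint Ff (p q r : R) (A B : C) (n : nat) (v : Z * Z) : C :=
  match n with
  | O => base q r A B v
  | S n' => if (2 <=? Z.abs (snd v))%Z then
      let P := choose v in
      (cst p q r (colz v) - Ff p q r A B n' (fst P) * Ff p q r A B n' (snd P)
        - Ff p q r A B n' (zsub (fst P) (snd P)))%C
      else base q r A B v
  end.

Definition msr (v : Z * Z) : nat := Z.to_nat (Z.abs (snd v)).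

Definition F p q r A B (v : Z * Z) : C := Ff p q r A B (msr v) v.

Lemma is_parb_spec v X Y : is_parb v (X, Y) = true <-> is_par v X Y.
Proof.
  destruct v as [v1 v2], X as [x1 x2], Y as [y1 y2]. unfold is_parb, is_par, zadd; simpl.
  rewrite !Bool.andb_true_iff, !Z.eqb_eq, Z.ltb_lt. split.
  - intros [[[H1 H2] H3] H4]. repeat split; auto. f_equal; auto.
  - intros [H1 [H2 H3]]. injection H2 as -> ->. repeat split; auto.
Qed.

Lemma choose_valid v : (exists X Y, is_par v X Y) -> is_par v (fst (choose v)) (snd (choose v)).
Proof.
  intros [X [Y H]]. unfold choose.
  assert (E : is_parb v (epsilon (inhabits dflt) (fun P => is_parb v P = true)) = true).
  { apply (epsilon_spec (inhabits dflt) (fun P => is_parb v P = true)). exists (X, Y). now apply is_parb_spec. }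
  rewrite E. destruct (epsilon _ _) as [a b]. now apply is_parb_spec.
Qed.

Lemma choose_invalid v : ~ (exists X Y, is_par v X Y) -> choose v = dflt.
Proof.
  intros H. unfold choose. destruct (is_parb v _) eqn:E; auto.
  exfalso. apply H. destruct (epsilon _ _) as [a b]. exists a, b. now apply is_parb_spec.
Qed.

Lemma choose_msr v : (2 <= Z.abs (snd v))%Z ->
  (msr (fst (choose v)) < msr v /\ msr (snd (choose v)) < msr v /\
   msr (zsub (fst (choose v)) (snd (choose v))) < msr v)%nat.
Proof.
  intros H. unfold msr.
  destruct (classic (exists X Y, is_par v X Y)) as [Hc|Hc].
  - pose proof (choose_valid v Hc) as [H1 [H2 H3]].
    destruct (choose v) as [[x1 x2] [y1 y2]]. destruct v as [v1 v2].
    unfold zadd, zsub in *; simpl in *. injection H2 as E1 E2. subst. lia.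
  - rewrite (choose_invalid v Hc). unfold dflt, zsub; simpl. lia.
Qed.

Lemma Ff_S p q r A B n v : Ff p q r A B (S n) v =
  if (2 <=? Z.abs (snd v))%Z then
      (cst p q r (colz v) - Ff p q r A B n (fst (choose v)) * Ff p q r A B n (snd (choose v))
        - Ff p q r A B n (zsub (fst (choose v)) (snd (choose v))))%C
      else base q r A B v.
Proof. reflexivity. Qed.

Lemma Ff_succ p q r A B n v : (msr v <= n)%nat -> Ff p q r A B (S n) v = Ff p q r A B n v.
Proof.
  revert v; induction n as [|n IH]; intros v Hv.
  - simpl. destruct (2 <=? Z.abs (snd v))%Z eqn:E; auto.
    unfold msr in Hv. apply Z.leb_le in E. lia.
  - rewrite (Ff_S _ _ _ _ _ (S n) v), (Ff_S _ _ _ _ _ n v). destruct (2 <=? Z.abs (snd v))%Z eqn:E; auto.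
    apply Z.leb_le in E. destruct (choose_msr v E) as [h1 [h2 h3]].
    rewrite (IH (fst (choose v)) ltac:(lia)), (IH (snd (choose v)) ltac:(lia)), (IH (zsub (fst (choose v)) (snd (choose v))) ltac:(lia)). reflexivity.
Qed.

Lemma Ff_stable p q r A B n v : (msr v <= n)%nat -> Ff p q r A B n v = F p q r A B v.
Proof.
  intros H. unfold F. induction H; auto. rewrite Ff_succ; auto.
Qed.

Lemma F_unfold p q r A B v : (2 <= Z.abs (snd v))%Z ->
  F p q r A B v = (cst p q r (colz v) - F p q r A B (fst (choose v)) * F p q r A B (snd (choose v))
     - F p q r A B (zsub (fst (choose v)) (snd (choose v))))%C.
Proof.
  intros H. destruct (choose_msr v H) as [h1 [h2 h3]].
  unfold F at 1. remember (msr v) as m. destruct m as [|m]. lia.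
  rewrite Ff_S. apply Z.leb_le in H. rewrite H.
  rewrite !Ff_stable by lia. reflexivity.
Qed.

Lemma F_base p q r A B v : (Z.abs (snd v) <= 1)%Z -> F p q r A B v = base q r A B v.
Proof.
  intros H. unfold F. remember (msr v) as m. destruct m; simpl; auto.
  replace (2 <=? Z.abs (snd v))%Z with false; auto. symmetry; apply Z.leb_gt; lia.
Qed.


Lemma is_par_opp v X Y : is_par v X Y -> is_par (zopp v) (zopp X) (zopp Y).
Proof.
  destruct v as [v1 v2], X as [x1 x2], Y as [y1 y2]. unfold is_par, zopp, zdet, zadd; simpl.
  intros [H1 [H2 H3]]. injection H2 as <- <-. repeat split.
  - replace (- x1 * - y2 - - x2 * - y1)%Z with (x1 * y2 - x2 * y1)%Z by ring. auto.
  - f_equal; ring.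
  - lia.
Qed.

Lemma zopp_opp v : zopp (zopp v) = v.
Proof. destruct v; unfold zopp; simpl; f_equal; ring. Qed.

Lemma msr_opp v : msr (zopp v) = msr v.
Proof. destruct v; unfold msr, zopp; simpl. f_equal. lia. Qed.

Lemma F_even p q r A B v : F p q r A B (zopp v) = F p q r A B v.
Proof.
  remember (msr v) as n. assert (Hn : (msr v <= n)%nat) by lia. clear Heqn.
  revert v Hn. induction n as [n IH] using lt_wf_ind. intros v Hn.
  destruct (Z_le_gt_dec (Z.abs (snd v)) 1) as [Hb|Hb].
  - rewrite !F_base; [|auto|destruct v; unfold zopp; simpl in *; lia].
    destruct v as [a b]; unfold base, zopp; simpl.
    replace (- b =? 0)%Z with (b =? 0)%Z by (destruct (Z.eqb_spec b 0); destruct (Z.eqb_spec (-b) 0); lia).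
    now replace (- a * - b)%Z with (a * b)%Z by ring.
  - assert (Hb' : (2 <= Z.abs (snd (zopp v)))%Z) by (destruct v; unfold zopp; simpl in *; lia).
    rewrite (F_unfold _ _ _ _ _ v) by lia. rewrite (F_unfold _ _ _ _ _ (zopp v)) by lia.
    rewrite colz_opp.
    assert (IH' : forall w, (msr w < msr v)%nat -> F p q r A B (zopp w) = F p q r A B w).
    { intros w Hw. apply (IH (msr w)); auto. lia. }
    destruct (classic (exists X Y, is_par v X Y)) as [Hc|Hc].
    + pose proof (choose_valid v Hc) as HP.
      assert (Hc' : exists X Y, is_par (zopp v) X Y).
      { destruct Hc as [X [Y H]]. exists (zopp X), (zopp Y). now apply is_par_opp. }
      pose proof (choose_valid (zopp v) Hc') as HP'.
      pose proof (is_par_opp _ _ _ HP) as HPo.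
      destruct (choose_msr v ltac:(lia)) as [h1 [h2 h3]].
      destruct (par_unique _ _ _ _ _ HPo HP') as [[E1 E2]|[E1 E2]]; rewrite E1, E2.
      * rewrite !IH' by auto.
        replace (zsub (zopp (fst (choose v))) (zopp (snd (choose v)))) with
          (zopp (zsub (fst (choose v)) (snd (choose v)))) by
          (destruct (choose v) as [[] []]; unfold zsub, zopp; simpl; f_equal; ring).
        rewrite IH' by auto. reflexivity.
      * rewrite !IH' by auto.
        replace (zsub (zopp (snd (choose v))) (zopp (fst (choose v)))) with
          (zsub (fst (choose v)) (snd (choose v))) by
          (destruct (choose v) as [[] []]; unfold zsub, zopp; simpl; f_equal; ring).
        f_equal. f_equal. apply Cmult_comm.
    + assert (Hc' : ~ exists X Y, is_par (zopp v) X Y).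
      { intros [X [Y H]]. apply Hc. exists (zopp X), (zopp Y).
        rewrite <- (zopp_opp v). now apply is_par_opp. }
      now rewrite (choose_invalid _ Hc), (choose_invalid _ Hc').
Qed.

Lemma F_znormal p q r A B v : F p q r A B (znormal v) = F p q r A B v.
Proof. destruct (znormal_cases v) as [-> | ->]; auto. apply F_even. Qed.


Definition cc (q r : R) (n : Z) : C := if Z.even n then RtoC q else RtoC r.

Lemma mod4_cases n : let j := (n mod 4)%Z in j = 0%Z \/ j = 1%Z \/ j = 2%Z \/ j = 3%Z.
Proof. simpl. pose proof (Z.mod_pos_bound n 4 ltac:(lia)). lia. Qed.

Lemma mod4_add n k : ((n + k) mod 4 = ((n mod 4) + k) mod 4)%Z.
Proof. now rewrite Z.add_mod_idemp_l by lia. Qed.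

Lemma even_mod4 n : Z.even n = Z.even (n mod 4).
Proof.
  rewrite (Z.div_mod n 4) at 1 by lia. rewrite Z.even_add, Z.even_mul. simpl.
  destruct (Z.even (n mod 4)); reflexivity.
Qed.

Lemma ch_add2 q r A B n : (ch q r A B n + ch q r A B (n + 2) = cc q r n)%C.
Proof.
  unfold ch, cc. rewrite (even_mod4 n), (mod4_add n 2).
  destruct (mod4_cases n) as [E|[E|[E|E]]]; rewrite E; simpl; ring.
Qed.

Lemma cc_add2 q r n : cc q r (n + 2) = cc q r n.
Proof. unfold cc. rewrite Z.even_add. simpl. destruct (Z.even n); auto. Qed.

Lemma ch_pair q r A B x y : (y = x + 2 \/ x = y + 2)%Z -> (ch q r A B x + ch q r A B y = cc q r x)%C.
Proof.
  intros [->| ->]. apply ch_add2. rewrite Cplus_comm, cc_add2. apply ch_add2.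
Qed.

Lemma F_chain p q r A B a e : Z.abs e = 1%Z -> F p q r A B (a, e) = ch q r A B (a * e).
Proof.
  intros He. rewrite F_base by (simpl; lia). unfold base; simpl.
  replace (e =? 0)%Z with false; auto. symmetry. apply Z.eqb_neq. lia.
Qed.

Lemma F_zero p q r A B a : F p q r A B (a, 0%Z) = 0%C.
Proof. rewrite F_base by (simpl; lia). reflexivity. Qed.

Lemma cst_chain p q r a e : Z.abs e = 1%Z -> cst p q r (colz (a, e)) = cc q r (a * e).
Proof.
  intros He. unfold colz, cc; simpl.
  assert (Ee : Z.even e = false) by (assert (He' : (e = 1 \/ e = -1)%Z) by lia; destruct He'; subst; reflexivity).
  rewrite Ee, Z.even_mul, Ee. destruct (Z.even a); reflexivity.
Qed.


Lemma abs_prod1 u v : Z.abs (u * v) = 1%Z -> (u = 1 \/ u = -1)%Z /\ (v = 1 \/ v = -1)%Z.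
Proof.
  intros H. assert (E : (u * v = 1 \/ (- u) * v = 1)%Z) by lia.
  destruct E as [E|E].
  - split. apply (Z.mul_eq_1 u v E). rewrite Z.mul_comm in E. apply (Z.mul_eq_1 v u E).
  - split. destruct (Z.mul_eq_1 _ _ E); lia. rewrite Z.mul_comm in E. apply (Z.mul_eq_1 v _ E).
Qed.

Lemma colz_sub_add U V : colz (zsub U V) = colz (zadd U V).
Proof.
  destruct U as [a b], V as [c d]; unfold colz, zsub, zadd; simpl.
  rewrite !Z.even_sub, !Z.even_add. reflexivity.
Qed.

Lemma zsub_swap U V : zsub V U = zopp (zsub U V).
Proof. destruct U, V; unfold zsub, zopp; simpl; f_equal; ring. Qed.

Lemma edge_case0 p q r A B U V : Z.abs (zdet U V) = 1%Z -> snd U = 0%Z ->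
  (F p q r A B (zadd U V) + F p q r A B (zsub U V) =
   cst p q r (colz (zadd U V)) - F p q r A B U * F p q r A B V)%C.
Proof.
  destruct U as [u1 u2], V as [v1 v2]; unfold zdet, zadd, zsub; simpl. intros H ->.
  rewrite Z.mul_0_l, Z.sub_0_r in H. destruct (abs_prod1 _ _ H) as [Hu Hv].
  rewrite F_zero. rewrite Z.add_0_l, Z.sub_0_l.
  rewrite !F_chain by lia. rewrite cst_chain by lia.
  assert (E : forall c x : C, (c - 0 * x = c)%C) by (intros; ring). rewrite E.
  apply ch_pair.
  destruct Hu, Hv; subst; lia.
Qed.

Lemma edge_same p q r A B U V : Z.abs (zdet U V) = 1%Z -> (0 < snd U * snd V)%Z ->
  (F p q r A B (zadd U V) + F p q r A B (zsub U V) =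
   cst p q r (colz (zadd U V)) - F p q r A B U * F p q r A B V)%C.
Proof.
  intros H Hs.
  assert (HP : is_par (zadd U V) U V).
  { split; auto. split; auto. destruct U as [u1 u2], V as [v1 v2]; unfold zadd; simpl in *. nia. }
  assert (Hb : (2 <= Z.abs (snd (zadd U V)))%Z).
  { destruct U as [u1 u2], V as [v1 v2]; unfold zadd; simpl in *. nia. }
  rewrite (F_unfold _ _ _ _ _ _ Hb).
  pose proof (choose_valid (zadd U V) (ex_intro _ U (ex_intro _ V HP))) as HC.
  destruct (par_unique _ _ _ _ _ HP HC) as [[E1 E2]|[E1 E2]]; rewrite E1, E2.
  - ring.
  - rewrite zsub_swap, F_even. ring.
Qed.

Lemma edge_rel p q r A B U V : Z.abs (zdet U V) = 1%Z ->
  (F p q r A B (zadd U V) + F p q r A B (zsub U V) =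
   cst p q r (colz (zadd U V)) - F p q r A B U * F p q r A B V)%C.
Proof.
  intros H.
  destruct (Z.eq_dec (snd U) 0) as [HU|HU]. { now apply edge_case0. }
  destruct (Z.eq_dec (snd V) 0) as [HV|HV].
  { replace (zadd U V) with (zadd V U) by (destruct U, V; unfold zadd; simpl; f_equal; ring).
    rewrite <- (F_even _ _ _ _ _ (zsub U V)), <- zsub_swap.
    rewrite edge_case0; auto. ring.
    destruct U as [u1 u2], V as [v1 v2]; unfold zdet in *; simpl in *.
    replace (v1 * u2 - v2 * u1)%Z with (-(u1 * v2 - u2 * v1))%Z by ring. lia. }
  destruct (Z_lt_le_dec 0 (snd U * snd V)) as [Hs|Hs].
  { now apply edge_same. }
  assert (H' : Z.abs (zdet U (zopp V)) = 1%Z).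
  { destruct U as [u1 u2], V as [v1 v2]; unfold zdet, zopp in *; simpl in *.
    replace (u1 * - v2 - u2 * - v1)%Z with (-(u1 * v2 - u2 * v1))%Z by ring. lia. }
  assert (Hs' : (0 < snd U * snd (zopp V))%Z).
  { destruct U as [u1 u2], V as [v1 v2]; unfold zopp in *; simpl in *. nia. }
  pose proof (edge_same p q r A B U (zopp V) H' Hs') as E.
  replace (zadd U (zopp V)) with (zsub U V) in E by (destruct U, V; unfold zadd, zsub, zopp; simpl; f_equal; ring).
  replace (zsub U (zopp V)) with (zadd U V) in E by (destruct U, V; unfold zadd, zsub, zopp; simpl; f_equal; ring).
  rewrite F_even, colz_sub_add in E. rewrite <- E. ring.
Qed.


Open Scope C_scope.

Definition Kf p q r (s : R) A B (U V T : Z * Z) : C :=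
  let x := F p q r A B U in let y := F p q r A B V in let z := F p q r A B T in
  x * x + y * y + z * z + x * y * z
  - cst p q r (colz U) * x - cst p q r (colz V) * y - cst p q r (colz T) * z - RtoC s.

Definition KK p q r s A B U V := Kf p q r s A B U V (zadd U V).

Lemma Kf_12 p q r s A B U V T : Kf p q r s A B U V T = Kf p q r s A B V U T.
Proof. unfold Kf. ring. Qed.
Lemma Kf_23 p q r s A B U V T : Kf p q r s A B U V T = Kf p q r s A B U T V.
Proof. unfold Kf. ring. Qed.
Lemma Kf_opp3 p q r s A B U V T : Kf p q r s A B U V (zopp T) = Kf p q r s A B U V T.
Proof. unfold Kf. now rewrite F_even, colz_opp. Qed.
Lemma Kf_opp2 p q r s A B U V T : Kf p q r s A B U (zopp V) T = Kf p q r s A B U V T.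
Proof. unfold Kf. now rewrite F_even, colz_opp. Qed.

Lemma Kf_flip p q r s A B U V : Z.abs (zdet U V) = 1%Z ->
  Kf p q r s A B U V (zadd U V) = Kf p q r s A B U V (zsub U V).
Proof.
  intros H. pose proof (edge_rel p q r A B U V H) as E.
  unfold Kf. rewrite colz_sub_add.
  set (a := F p q r A B (zadd U V)) in *. set (b := F p q r A B (zsub U V)) in *.
  set (c := cst p q r (colz (zadd U V))) in *.
  assert (Ea : a = c - F p q r A B U * F p q r A B V - b).
  { rewrite <- E. ring. }
  rewrite Ea. ring.
Qed.

Lemma det_opp2 U V : Z.abs (zdet U (zopp V)) = Z.abs (zdet U V).
Proof. destruct U, V; unfold zdet, zopp; simpl. rewrite <- Z.abs_opp. f_equal. ring. Qed.
Lemma det_swap U V : Z.abs (zdet V U) = Z.abs (zdet U V).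
Proof. destruct U, V; unfold zdet; simpl. rewrite <- Z.abs_opp. f_equal. ring. Qed.
Lemma det_shift U V : Z.abs (zdet (zadd U V) (zopp V)) = Z.abs (zdet U V).
Proof. destruct U, V; unfold zdet, zadd, zopp; simpl. rewrite <- Z.abs_opp. f_equal. ring. Qed.

Lemma KK_flip p q r s A B U V : Z.abs (zdet U V) = 1%Z ->
  KK p q r s A B U V = KK p q r s A B U (zopp V).
Proof.
  intros H. unfold KK. rewrite Kf_flip by auto. rewrite <- (Kf_opp2 _ _ _ _ _ _ U V).
  all: try (destruct U, V; unfold zsub, zadd, zopp; simpl; f_equal; ring).
Qed.

Lemma KK_swap p q r s A B U V : KK p q r s A B U V = KK p q r s A B V U.
Proof.
  unfold KK. rewrite Kf_12. f_equal. destruct U, V; unfold zadd; simpl; f_equal; ring.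
Qed.

Lemma KK_shift p q r s A B U V : KK p q r s A B U V = KK p q r s A B (zadd U V) (zopp V).
Proof.
  unfold KK. replace (zadd (zadd U V) (zopp V)) with U by (destruct U, V; unfold zadd, zopp; simpl; f_equal; ring).
  rewrite Kf_opp2. rewrite (Kf_23 _ _ _ _ _ _ (zadd U V) V U), (Kf_12 _ _ _ _ _ _ (zadd U V) U V), (Kf_23 _ _ _ _ _ _ U (zadd U V) V). reflexivity.
Qed.

Lemma chainK q r s A B n :
  A * A + B * B - RtoC q * A - RtoC r * B - RtoC s = 0 ->
  ch q r A B n * ch q r A B n + ch q r A B (n + 1) * ch q r A B (n + 1)
  - cc q r n * ch q r A B n - cc q r (n + 1) * ch q r A B (n + 1) - RtoC s = 0.
Proof.
  intros Hs. unfold ch, cc.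
  rewrite (even_mod4 (n + 1)), (mod4_add n 1), (even_mod4 n).
  destruct (mod4_cases n) as [E|[E|[E|E]]]; rewrite E; simpl; rewrite <- Hs; ring.
Qed.

Lemma chainK2 q r s A B x y :
  A * A + B * B - RtoC q * A - RtoC r * B - RtoC s = 0 -> (y = x + 1 \/ x = y + 1)%Z ->
  ch q r A B x * ch q r A B x + ch q r A B y * ch q r A B y
  - cc q r x * ch q r A B x - cc q r y * ch q r A B y - RtoC s = 0.
Proof.
  intros Hs [-> | ->]. now apply chainK.
  rewrite <- (chainK q r s A B y Hs). ring.
Qed.

Lemma KK_base0 p q r s A B U V :
  A * A + B * B - RtoC q * A - RtoC r * B - RtoC s = 0 ->
  Z.abs (zdet U V) = 1%Z -> snd U = 0%Z -> KK p q r s A B U V = 0.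
Proof.
  intros Hs. destruct U as [u1 u2], V as [v1 v2]; unfold KK, Kf, zdet, zadd; simpl. intros H ->.
  rewrite Z.mul_0_l, Z.sub_0_r in H. destruct (abs_prod1 _ _ H) as [Hu Hv].
  rewrite F_zero, Z.add_0_l. rewrite !F_chain by lia. rewrite (cst_chain p q r v1 v2), (cst_chain p q r (u1 + v1) v2) by lia.
  etransitivity; [|apply (chainK2 q r s A B (v1 * v2) ((u1 + v1) * v2) Hs)].
  ring. destruct Hu, Hv; subst; lia.
Qed.

Lemma KK_base p q r s A B U V :
  A * A + B * B - RtoC q * A - RtoC r * B - RtoC s = 0 ->
  Z.abs (zdet U V) = 1%Z -> (snd U = 0 \/ snd V = 0 \/ snd (zadd U V) = 0)%Z ->
  KK p q r s A B U V = 0.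
Proof.
  intros Hs H [H0|[H0|H0]].
  - now apply KK_base0.
  - rewrite KK_swap. apply KK_base0; auto. now rewrite det_swap.
  - rewrite KK_shift. apply KK_base0; auto. now rewrite det_shift.
Qed.

Definition vm (U V : Z * Z) : nat :=
  Z.to_nat (Z.abs (snd U) + Z.abs (snd V) + Z.abs (snd U + snd V)).

Lemma KK_zero p q r s A B U V :
  A * A + B * B - RtoC q * A - RtoC r * B - RtoC s = 0 ->
  Z.abs (zdet U V) = 1%Z -> KK p q r s A B U V = 0.
Proof.
  intros Hs. remember (vm U V) as n. assert (Hn : (vm U V <= n)%nat) by lia. clear Heqn.
  revert U V Hn. induction n as [n IH] using lt_wf_ind. intros U V Hn H.
  destruct (classic (snd U = 0 \/ snd V = 0 \/ snd (zadd U V) = 0)%Z) as [H0|H0].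
  { now apply KK_base. }
  assert (HU : snd U <> 0%Z) by tauto. assert (HV : snd V <> 0%Z) by tauto.
  assert (HUV : (snd U + snd V <> 0)%Z) by (destruct U, V; unfold zadd in H0; simpl in *; tauto).
  destruct (Z_lt_le_dec 0 (snd U * snd V)) as [Hs'|Hs'].
  - rewrite KK_flip by auto. apply (IH (vm U (zopp V))).
    + unfold vm in *. destruct U as [u1 u2], V as [v1 v2]; unfold zopp; simpl in *. nia.
    + lia.
    + now rewrite det_opp2.
  - destruct (Z_lt_le_dec (Z.abs (snd V)) (Z.abs (snd U))) as [Hl|Hl].
    + rewrite KK_shift, KK_flip by (now rewrite det_shift).
      rewrite zopp_opp. apply (IH (vm (zadd U V) V)).
      * unfold vm in *. destruct U as [u1 u2], V as [v1 v2]; unfold zadd; simpl in *. nia.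
      * lia.
      * destruct U as [u1 u2], V as [v1 v2]; unfold zdet, zadd in *; simpl in *.
        replace ((u1 + v1) * v2 - (u2 + v2) * v1)%Z with (u1 * v2 - u2 * v1)%Z by ring. auto.
    + rewrite KK_swap, KK_shift, KK_flip by (rewrite det_shift; now rewrite det_swap).
      rewrite zopp_opp. apply (IH (vm (zadd V U) U)).
      * unfold vm in *. destruct U as [u1 u2], V as [v1 v2]; unfold zadd; simpl in *.
        assert (Z.abs v2 <> Z.abs u2) by (intro; apply HUV; nia). nia.
      * lia.
      * destruct U as [u1 u2], V as [v1 v2]; unfold zdet, zadd in *; simpl in *.
        replace ((v1 + u1) * u2 - (v2 + u2) * u1)%Z with (-(u1 * v2 - u2 * v1))%Z by ring. lia.
Qed.


Close Scope C_scope.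

Lemma Cmod_sub3 a b c : (Cmod (a - b - c) <= Cmod a + Cmod b + Cmod c)%R.
Proof.
  unfold Cminus. eapply Rle_trans. apply Cmod_triangle. rewrite Cmod_opp.
  pose proof (Cmod_triangle a (- b)). rewrite Cmod_opp in H. lra.
Qed.

Lemma grow_ineq (Cc : R) (c x y w z : C) :
  (0 <= Cc)%R -> (Cmod c <= Cc)%R -> (3 + Cc <= Cmod x)%R -> (3 + Cc <= Cmod y)%R ->
  (Cmod y <= Cmod x)%R -> (Cmod w <= Cmod x)%R -> z = (c - x * y - w)%C ->
  (Cmod x <= Cmod z)%R /\ (Cmod y <= Cmod z)%R /\ (3 + Cc <= Cmod z)%R.
Proof.
  intros H0 Hc Hx Hy Hyx Hw Hz.
  assert (E : (x * y = c - z - w)%C) by (rewrite Hz; ring).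
  pose proof (Cmod_sub3 c z w) as T. rewrite <- E, Cmod_mult in T.
  assert (Cmod x <= Cmod z)%R by nra. lra.
Qed.

Lemma cst_bound p q r k : (Cmod (cst p q r k) <= Rabs p + Rabs q + Rabs r)%R.
Proof.
  pose proof (Rabs_pos p); pose proof (Rabs_pos q); pose proof (Rabs_pos r).
  destruct k as [|[|[|k]]]; simpl; rewrite Cmod_R; lra.
Qed.

Lemma exist_par U V : Z.abs (zdet U V) = 1%Z -> (2 <= Z.abs (snd V))%Z ->
  exists X Y, Z.abs (zdet X Y) = 1%Z /\ zadd X Y = V /\ (0 < snd X * snd Y)%Z.
Proof.
  assert (Main : forall U V, Z.abs (zdet U V) = 1%Z -> (2 <= snd V)%Z ->
    exists X Y, Z.abs (zdet X Y) = 1%Z /\ zadd X Y = V /\ (0 < snd X * snd Y)%Z).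
  { intros [u1 u2] [v1 v2]; unfold zdet, zadd; simpl; intros H Hv.
    set (k := (u2 / v2)%Z).
    pose proof (Z.mod_pos_bound u2 v2 ltac:(lia)) as Hm.
    pose proof (Z.div_mod u2 v2 ltac:(lia)) as Hd.
    exists (u1 - k * v1, u2 - k * v2)%Z, (v1 - (u1 - k * v1), v2 - (u2 - k * v2))%Z. simpl.
    assert (Hb : (u2 - k * v2 = u2 mod v2)%Z) by (unfold k; lia).
    assert (Hdet : ((u1 - k * v1) * (v2 - (u2 - k * v2)) - (u2 - k * v2) * (v1 - (u1 - k * v1)) = u1 * v2 - u2 * v1)%Z) by ring.
    assert (Hnz : (u2 mod v2 <> 0)%Z).
    { intro E. rewrite E in Hb.
      assert (E2 : (u1 * v2 - u2 * v1 = (u1 - k * v1) * v2)%Z) by (replace u2 with (k * v2)%Z at 1 by lia; ring).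
      rewrite E2, Z.abs_mul in H. assert (0 <= Z.abs (u1 - k * v1))%Z by lia. assert (Z.abs v2 = v2) by lia. rewrite H1 in H. clear - H Hv H0. revert H H0; generalize (Z.abs (u1 - k * v1)); intros a Ha Ha0; destruct (Z.eq_dec a 0); [subst; lia|]; assert (1 <= a)%Z by lia; nia. }
    repeat split.
    - rewrite Hdet. auto.
    - f_equal; ring.
    - rewrite Hb. nia. }
  intros H Hv. destruct (Z_le_gt_dec 2 (snd V)) as [Hp|Hn].
  - now apply (Main U).
  - destruct (Main U (zopp V)) as [X [Y [H1 [H2 H3]]]].
    + now rewrite det_opp2.
    + destruct V; unfold zopp; simpl in *; lia.
    + exists (zopp X), (zopp Y). repeat split.
      * destruct X, Y; unfold zdet, zopp in *; simpl in *. replace (- z * - z2 - - z0 * - z1)%Z with (z * z2 - z0 * z1)%Z by ring. auto.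
      * rewrite <- (zopp_opp V), <- H2. destruct X, Y; unfold zadd, zopp; simpl; f_equal; ring.
      * destruct X, Y; unfold zopp; simpl in *; nia.
Qed.


Lemma growth p q r A B :
  (forall n, (3 + (Rabs p + Rabs q + Rabs r) <= Cmod (ch q r A B n))%R) ->
  forall n U V, Z.abs (zdet U V) = 1%Z -> (0 < snd U * snd V)%Z ->
  (Z.to_nat (Z.abs (snd U + snd V)) <= n)%nat ->
  (Cmod (F p q r A B U) <= Cmod (F p q r A B (zadd U V)))%R /\
  (Cmod (F p q r A B V) <= Cmod (F p q r A B (zadd U V)))%R /\
  (3 + (Rabs p + Rabs q + Rabs r) <= Cmod (F p q r A B (zadd U V)))%R.
Proof.
  intros Hch. set (Cc := (Rabs p + Rabs q + Rabs r)%R).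
  assert (HC0 : (0 <= Cc)%R) by (unfold Cc; pose proof (Rabs_pos p); pose proof (Rabs_pos q); pose proof (Rabs_pos r); lra).
  intros n. induction n as [n IH] using lt_wf_ind. intros U V H Hs Hn.
  assert (TV : forall W X, Z.abs (zdet X W) = 1%Z -> (1 <= Z.abs (snd W))%Z ->
     (Z.to_nat (Z.abs (snd W)) < n)%nat -> (3 + Cc <= Cmod (F p q r A B W))%R).
  { intros W X HW1 HW2 HW3. destruct (Z.eq_dec (Z.abs (snd W)) 1) as [E|E].
    - destruct W as [w1 w2]. rewrite F_chain by auto. apply Hch.
    - destruct (exist_par X W HW1 ltac:(lia)) as [X' [Y' [G1 [G2 G3]]]].
      rewrite <- G2. apply (IH (Z.to_nat (Z.abs (snd W)))); auto.
      rewrite <- G2. destruct X', Y'; unfold zadd; simpl. lia. }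
  pose proof (edge_rel p q r A B U V H) as E.
  assert (EZ : F p q r A B (zadd U V) = (cst p q r (colz (zadd U V)) - F p q r A B U * F p q r A B V - F p q r A B (zsub U V))%C).
  { rewrite <- E. ring. }
  pose proof (cst_bound p q r (colz (zadd U V))) as Hc.
  destruct (Z.eq_dec (snd U) (snd V)) as [Eb|Eb].
  -
    assert (Hb1 : Z.abs (snd U) = 1%Z).
    { destruct U as [u1 u2], V as [v1 v2]; unfold zdet in H; simpl in *. subst v2.
      replace (u1 * u2 - u2 * v1)%Z with (u2 * (u1 - v1))%Z in H by ring.
      destruct (abs_prod1 _ _ H) as [h _]. lia. }
    assert (HW : F p q r A B (zsub U V) = 0%C).
    { destruct U as [u1 u2], V as [v1 v2]; unfold zsub; simpl in *. subst v2.
      rewrite Z.sub_diag. apply F_zero. }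
    rewrite HW in EZ.
    assert (HU : (3 + Cc <= Cmod (F p q r A B U))%R).
    { destruct U as [u1 u2]; rewrite F_chain by auto; apply Hch. }
    assert (HV : (3 + Cc <= Cmod (F p q r A B V))%R).
    { destruct V as [v1 v2]; simpl in *; rewrite F_chain by lia; apply Hch. }
    destruct (Rle_dec (Cmod (F p q r A B V)) (Cmod (F p q r A B U))) as [L|L].
    + apply (grow_ineq Cc (cst p q r (colz (zadd U V))) (F p q r A B U) (F p q r A B V) 0%C (F p q r A B (zadd U V))); auto. rewrite Cmod_0. lra.
    + destruct (grow_ineq Cc (cst p q r (colz (zadd U V))) (F p q r A B V) (F p q r A B U) 0%C (F p q r A B (zadd U V))) as [g1 [g2 g3]]; auto; try lra.
      rewrite Cmod_0; lra. rewrite EZ; ring.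
  - destruct (Z_lt_le_dec (Z.abs (snd V)) (Z.abs (snd U))) as [L|L].
    +
      set (W := zsub U V).
      assert (EU : zadd V W = U) by (unfold W; destruct U, V; unfold zadd, zsub; simpl; f_equal; ring).
      assert (HVW : Z.abs (zdet V W) = 1%Z).
      { unfold W; destruct U as [u1 u2], V as [v1 v2]; unfold zdet, zsub in *; simpl in *.
        replace (v1 * (u2 - v2) - v2 * (u1 - v1))%Z with (-(u1 * v2 - u2 * v1))%Z by ring. lia. }
      assert (HsW : (0 < snd V * snd W)%Z).
      { unfold W; destruct U as [u1 u2], V as [v1 v2]; unfold zsub; simpl in *. nia. }
      destruct (IH (Z.to_nat (Z.abs (snd U))) ltac:(destruct U, V; simpl in *; nia) V W HVW HsW)
        as [i1 [i2 i3]].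
      { unfold W; destruct U, V; unfold zsub; simpl; lia. }
      rewrite EU in i1, i2, i3.
      assert (HV : (3 + Cc <= Cmod (F p q r A B V))%R).
      { apply (TV V U); auto. destruct U, V; simpl in *; nia. destruct U, V; simpl in *; nia. }
      apply (grow_ineq Cc (cst p q r (colz (zadd U V))) (F p q r A B U) (F p q r A B V) (F p q r A B W) (F p q r A B (zadd U V))); auto.
    + assert (L' : (Z.abs (snd U) < Z.abs (snd V))%Z) by (destruct U, V; simpl in *; nia).
      set (W := zsub V U).
      assert (EV : zadd U W = V) by (unfold W; destruct U, V; unfold zadd, zsub; simpl; f_equal; ring).
      assert (HUW : Z.abs (zdet U W) = 1%Z).
      { unfold W; destruct U as [u1 u2], V as [v1 v2]; unfold zdet, zsub in *; simpl in *.
        replace (u1 * (v2 - u2) - u2 * (v1 - u1))%Z with (u1 * v2 - u2 * v1)%Z by ring. lia. }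
      assert (HsW : (0 < snd U * snd W)%Z).
      { unfold W; destruct U as [u1 u2], V as [v1 v2]; unfold zsub; simpl in *. nia. }
      destruct (IH (Z.to_nat (Z.abs (snd V))) ltac:(destruct U, V; simpl in *; nia) U W HUW HsW)
        as [i1 [i2 i3]].
      { unfold W; destruct U, V; unfold zsub; simpl; lia. }
      rewrite EV in i1, i2, i3.
      assert (HU : (3 + Cc <= Cmod (F p q r A B U))%R).
      { apply (TV U V); auto. now rewrite det_swap. destruct U, V; simpl in *; nia. destruct U, V; simpl in *; nia. }
      assert (EW : F p q r A B (zsub U V) = F p q r A B W) by (unfold W; now rewrite zsub_swap, F_even).
      destruct (grow_ineq Cc (cst p q r (colz (zadd U V))) (F p q r A B V) (F p q r A B U) (F p q r A B W) (F p q r A B (zadd U V))) as [g1 [g2 g3]]; auto.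
      rewrite EZ, EW; ring.
Qed.


Ltac ra x := let h := fresh in destruct (Rle_or_lt 0 x) as [h|h];
  [rewrite (Rabs_right x) in * by lra | rewrite (Rabs_left x) in * by lra].

Lemma im_le_Cmod (x y : R) : (Rabs y <= Cmod (x, y))%R.
Proof.
  pose proof (Cmod2_alt (x, y)) as H. simpl in H. pose proof (Cmod_ge_0 (x, y)).
  ra y; nra.
Qed.

Lemma Cmod_RtoC_pair (x : R) : Cmod (RtoC x) = Rabs x.
Proof. apply Cmod_R. Qed.

Definition Tpar (p q r s : R) : R :=
  (2 * (3 + (Rabs p + Rabs q + Rabs r)) + Rabs q + Rabs r + Rabs (s + q * q / 4 + r * r / 4) + 2)%R.
Definition Spar (q r s : R) : R := (s + q * q / 4 + r * r / 4)%R.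
Definition apar p q r s : R := ((Tpar p q r s + Spar q r s / Tpar p q r s) / 2)%R.
Definition bpar p q r s : R := ((Tpar p q r s - Spar q r s / Tpar p q r s) / 2)%R.
Definition Apar p q r s : C := RtoC (q / 2 + apar p q r s).
Definition Bpar p q r s : C := (r / 2, bpar p q r s)%R.

Lemma Tpar_pos p q r s : (0 < Tpar p q r s)%R.
Proof.
  unfold Tpar. pose proof (Rabs_pos p); pose proof (Rabs_pos q); pose proof (Rabs_pos r);
  pose proof (Rabs_pos (s + q * q / 4 + r * r / 4)). lra.
Qed.

Lemma S_over_T p q r s : (Rabs (Spar q r s / Tpar p q r s) <= 1)%R.
Proof.
  pose proof (Tpar_pos p q r s) as HT.
  unfold Rdiv. rewrite Rabs_mult, Rabs_inv, (Rabs_right (Tpar _ _ _ _)) by lra.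
  apply (Rmult_le_reg_r (Tpar p q r s)); auto. rewrite Rmult_assoc, Rinv_l, Rmult_1_r, Rmult_1_l by lra.
  unfold Tpar, Spar. pose proof (Rabs_pos p); pose proof (Rabs_pos q); pose proof (Rabs_pos r). lra.
Qed.

Lemma chain_eq p q r s :
  (Apar p q r s * Apar p q r s + Bpar p q r s * Bpar p q r s - RtoC q * Apar p q r s
   - RtoC r * Bpar p q r s - RtoC s = 0)%C.
Proof.
  pose proof (Tpar_pos p q r s) as HT.
  unfold Apar, Bpar, apar, bpar, Spar. set (T := Tpar p q r s) in *.
  apply injective_projections; simpl; field; lra.
Qed.

Lemma chain_bound p q r s n :
  (3 + (Rabs p + Rabs q + Rabs r) <= Cmod (ch q r (Apar p q r s) (Bpar p q r s) n))%R.
Proof.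
  pose proof (S_over_T p q r s) as HS. pose proof (Tpar_pos p q r s) as HT.
  assert (HT2 : (2 * (3 + (Rabs p + Rabs q + Rabs r)) + Rabs q + Rabs r + 2 <= Tpar p q r s)%R).
  { unfold Tpar. pose proof (Rabs_pos (s + q * q / 4 + r * r / 4)). lra. }
  set (u := (Spar q r s / Tpar p q r s)%R) in *.
  assert (Ha : (apar p q r s = (Tpar p q r s + u) / 2)%R) by reflexivity.
  assert (Hb : (bpar p q r s = (Tpar p q r s - u) / 2)%R) by reflexivity.
  pose proof (Rabs_pos q). pose proof (Rabs_pos r).
  assert (Hq : (Rabs q >= 0)%R) by (apply Rle_ge, Rabs_pos).
  unfold ch; destruct (mod4_cases n) as [E|[E|[E|E]]]; rewrite E; unfold Apar, Bpar.
  - rewrite Cmod_R, Ha. ra u; ra q; ra (q / 2 + (Tpar p q r s + u) / 2); lra.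
  - eapply Rle_trans; [|apply im_le_Cmod]. rewrite Hb. ra u; ra ((Tpar p q r s - u) / 2); lra.
  - rewrite <- RtoC_minus, Cmod_R, Ha. ra u; ra q; ra (q - (q / 2 + (Tpar p q r s + u) / 2)); lra.
  - unfold Cminus, Cplus, Copp, RtoC; simpl. eapply Rle_trans; [|apply im_le_Cmod]. rewrite Hb.
    ra u; ra (0 + - ((Tpar p q r s - u) / 2)); lra.
Qed.


Lemma det_odd U V : Z.abs (zdet U V) = 1%Z -> Z.even (zdet U V) = false.
Proof.
  intros H. assert (E : (zdet U V = 1 \/ zdet U V = -1)%Z) by lia.
  destruct E as [E|E]; rewrite E; reflexivity.
Qed.

Ltac par_solve H :=
    unfold zdet in H; simpl in H; unfold colz, zadd in *; simpl in *;
    rewrite Z.even_sub, !Z.even_mul in H; rewrite !Z.even_add;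
    repeat match goal with |- context [Z.even ?x] => is_var x; destruct (Z.even x) end;
    simpl in *; congruence.

Lemma col_23 U V : Z.abs (zdet U V) = 1%Z -> colz U = 2%nat -> colz V = 3%nat -> colz (zadd U V) = 1%nat.
Proof. intros H. apply det_odd in H. destruct U as [a b], V as [c d]. intros. par_solve H. Qed.
Lemma col_13 U V : Z.abs (zdet U V) = 1%Z -> colz U = 1%nat -> colz V = 3%nat -> colz (zadd U V) = 2%nat.
Proof. intros H. apply det_odd in H. destruct U as [a b], V as [c d]. intros. par_solve H. Qed.
Lemma col_12 U V : Z.abs (zdet U V) = 1%Z -> colz U = 1%nat -> colz V = 2%nat -> colz (zadd U V) = 3%nat.
Proof. intros H. apply det_odd in H. destruct U as [a b], V as [c d]. intros. par_solve H. Qed.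

Lemma sub_eq0 (a b : C) : (a - b = 0)%C -> a = b.
Proof. intros H. replace a with ((a - b) + b)%C by ring. rewrite H. ring. Qed.

Lemma F_region_bound p q r s (a b : Z) : Z.gcd a b = 1%Z -> (0 < b)%Z ->
  (3 + (Rabs p + Rabs q + Rabs r) <= Cmod (F p q r (Apar p q r s) (Bpar p q r s) (a, b)))%R.
Proof.
  intros Hg Hb. destruct (Z.eq_dec b 1) as [E|E].
  - subst. rewrite F_chain by reflexivity. apply chain_bound.
  - assert (Hz : Zis_gcd a b 1) by (rewrite <- Hg; apply Zgcd_is_gcd).
    destruct (Zis_gcd_bezout _ _ _ Hz) as [u v Huv].
    assert (HU : Z.abs (zdet (- v, u)%Z (a, b)) = 1%Z) by (unfold zdet; simpl; lia).
    destruct (exist_par _ _ HU ltac:(simpl; lia)) as [X [Y [H1 [H2 H3]]]].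
    rewrite <- H2. eapply (growth p q r _ _ (chain_bound p q r s) _ X Y H1 H3); auto.
Qed.

Theorem lemma5p2 (p q r s : R) :
  ~ (p = 0%R /\ q = 0%R /\ r = 0%R) ->
  let alpha := (Rmax (Rabs p) (Rmax (Rabs q) (Rabs r)) / 2)%R in
  exists phi : Omega -> C,
    markoff_map (RtoC p) (RtoC q) (RtoC r) (RtoC s) phi /\
    small_set_finite phi (2 + alpha)%R.
Proof.
  intros _ alpha.
  set (A := Apar p q r s). set (B := Bpar p q r s).
  exists (fun X => F p q r A B (rv X)). split.
  - assert (Fz : forall v, F p q r A B (znormal v) = F p q r A B v) by (intros; apply F_znormal).
    assert (Cz : forall v, colz (znormal v) = colz v)
      by (intros v; destruct (znormal_cases v) as [-> | ->]; auto; apply colz_opp).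
    split; [|split; [|split]].
    + intros X Y Z [Hadj Hz] c1 c2 c3. cbv beta zeta.
      assert (K : Kf p q r s A B (rv X) (rv Y) (rv Z) = 0%C).
      { assert (K0 := KK_zero p q r s A B (rv X) (rv Y) (chain_eq p q r s) Hadj). unfold KK in K0.
        destruct Hz as [Hz|Hz].
        - rewrite <- K0. unfold Kf. now rewrite Hz, Fz, Cz.
        - rewrite <- K0, Kf_flip by auto. unfold Kf. now rewrite Hz, Fz, Cz. }
      apply sub_eq0. rewrite <- K. unfold Kf.
      change (colz (rv X)) with (color X). change (colz (rv Y)) with (color Y).
      change (colz (rv Z)) with (color Z). rewrite c1, c2, c3. simpl. ring.
    + intros X Y Z W [Hadj [Hz Hw]] cx cy. cbv beta.
      rewrite Hz, Hw, !Fz. rewrite edge_rel by auto. rewrite (col_23 _ _ Hadj cx cy). reflexivity.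
    + intros X Y Z W [Hadj [Hz Hw]] cx cy. cbv beta.
      rewrite Hz, Hw, !Fz. rewrite edge_rel by auto. rewrite (col_13 _ _ Hadj cx cy). reflexivity.
    + intros X Y Z W [Hadj [Hz Hw]] cx cy. cbv beta.
      rewrite Hz, Hw, !Fz. rewrite edge_rel by auto. rewrite (col_12 _ _ Hadj cx cy). reflexivity.
  - exists ((1, 0)%Z :: nil). intros [[a b] [Hg Hb]] HX. unfold rv in *; simpl in *.
    destruct Hb as [Hb | [-> ->]]; [|left; reflexivity].
    exfalso. pose proof (F_region_bound p q r s a b Hg Hb) as HB. fold A B in HB.
    assert (Hal : (alpha <= (Rabs p + Rabs q + Rabs r) / 2)%R).
    { unfold alpha. pose proof (Rabs_pos p); pose proof (Rabs_pos q); pose proof (Rabs_pos r).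
      apply Rmult_le_compat_r; [lra|].
      apply Rmax_lub; [lra|]. apply Rmax_lub; lra. }
    pose proof (Rabs_pos p); pose proof (Rabs_pos q); pose proof (Rabs_pos r). lra.
Qed.
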